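(* Let $(L,I)$ and $(M,J)$ be integral systems on sets $X$ and $Y$ respectively, let $\rho:X\to[0,\infty)$ and let $\phi:X\to Y$ be a map such that $\rho\cdot(g\circ\phi)\in L$ and $I(\rho\cdot(g\circ\phi))=J(g)$ for every $g\in M$. Then for every $g\in M^1$ one has $\rho\cdot(g\circ\phi)\in L^1$ and $I^1(\rho\cdot(g\circ\phi))=J^1(g)$.
   Context: An integral system $(L,I)$ on a set $X$ consists of a linear lattice $L$ (a real vector space of real-valued functions on $X$ closed under pointwise $\max$ and $\min$) and a preintegral $I$ (a positive linear functional on $L$ with $I(f_n)\to0$ whenever $f_n\in L$, $f_n\downarrow0$ pointwise). $L_\uparrow$ (resp. $L_\downarrow$) is the set of $f:X\to(-\infty,\infty]$ (resp. $[-\infty,\infty)$) that are pointwise limits of increasing (resp. decreasing) sequences $f_n\in L$, with $I_\uparrow(f)$ (resp. $I_\downarrow(f)$) $=\lim I(f_n)$. Upper and lower integrals: $\overline I(f)=\inf\{I_\uparrow(g):g\in L_\uparrow,f\le g\}$, $\underline I(f)=\sup\{I_\downarrow(g):g\in L_\downarrow,g\le f\}$. A function $f:X\to\mathbb R$ is integrable if $\underline I(f)=\overline I(f)\in\mathbb R$; $L^1$ is the set of integrable functions and $I^1(f)$ the common value (Daniell extension). $(M^1,J^1)$ is defined in the same way from $(M,J)$. Convention: $0\cdot(\pm\infty)=0$. *)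

(* Defs.v *)
From HB Require Import structures.
From mathcomp Require Import all_boot all_order all_algebra.
From mathcomp Require Import all_classical all_reals.
From mathcomp Require Import ereal topology normedtype sequences.
Set Implicit Arguments. Unset Strict Implicit. Unset Printing Implicit Defensive.
Import Order.TTheory GRing.Theory Num.Theory numFieldNormedType.Exports.
Local Open Scope classical_set_scope.
Local Open Scope ring_scope.

Section Daniell.
Context {R : realType} {X : Type}.

Definition linear_lattice (L : set (X -> R)) : Prop :=
  [/\ L (fun _ => 0),
      (forall f g, L f -> L g -> L (fun x => f x + g x)),
      (forall (a : R) f, L f -> L (fun x => a * f x)),
      (forall f g, L f -> L g -> L (fun x => Num.max (f x) (g x))) &
      (forall f g, L f -> L g -> L (fun x => Num.min (f x) (g x)))].

Definition preintegral (L : set (X -> R)) (I : (X -> R) -> R) : Prop :=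
  [/\ (forall f g, L f -> L g -> I (fun x => f x + g x) = I f + I g),
      (forall (a : R) f, L f -> I (fun x => a * f x) = a * I f),
      (forall f, L f -> (forall x, 0 <= f x) -> 0 <= I f) &
      (forall fn : nat -> X -> R, (forall n, L (fn n)) ->
         (forall x n, fn n.+1 x <= fn n x) ->
         (forall x, (fun n => fn n x) @ \oo --> (0 : R)) ->
         (fun n => I (fn n)) @ \oo --> (0 : R))].

Definition integral_system (L : set (X -> R)) (I : (X -> R) -> R) : Prop :=
  linear_lattice L /\ preintegral L I.

Definition up_seq (L : set (X -> R)) (g : X -> \bar R) (fn : nat -> X -> R) :=
  [/\ (forall n, L (fn n)), (forall x n, fn n x <= fn n.+1 x) &
      (forall x, (fun n => (fn n x)%:E) @ \oo --> g x)].

Definition down_seq (L : set (X -> R)) (g : X -> \bar R) (fn : nat -> X -> R) :=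
  [/\ (forall n, L (fn n)), (forall x n, fn n.+1 x <= fn n x) &
      (forall x, (fun n => (fn n x)%:E) @ \oo --> g x)].

Definition Lup (L : set (X -> R)) : set (X -> \bar R) :=
  [set g | exists fn, up_seq L g fn].
Definition Ldown (L : set (X -> R)) : set (X -> \bar R) :=
  [set g | exists fn, down_seq L g fn].

(* I_up(g) = lim I(f_n); independent of the chosen sequence (standard
   Daniell theory), so we take the (common) value as an infimum. *)
Definition Iup (L : set (X -> R)) (I : (X -> R) -> R) (g : X -> \bar R) : \bar R :=
  ereal_inf [set lim ((fun n => (I (fn n))%:E) @ \oo) | fn in up_seq L g].
Definition Idown (L : set (X -> R)) (I : (X -> R) -> R) (g : X -> \bar R) : \bar R :=
  ereal_sup [set lim ((fun n => (I (fn n))%:E) @ \oo) | fn in down_seq L g].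

Local Open Scope ereal_scope.

Definition upper_integral L I (f : X -> \bar R) : \bar R :=
  ereal_inf [set Iup L I g | g in [set g | Lup L g /\ forall x, f x <= g x]].
Definition lower_integral L I (f : X -> \bar R) : \bar R :=
  ereal_sup [set Idown L I g | g in [set g | Ldown L g /\ forall x, g x <= f x]].

Definition integrable L I (f : X -> R) : Prop :=
  lower_integral L I (fun x => (f x)%:E) = upper_integral L I (fun x => (f x)%:E)
  /\ upper_integral L I (fun x => (f x)%:E) \is a fin_num.

Definition L1 L I : set (X -> R) := [set f | integrable L I f].

Definition I1 L I (f : X -> R) : R := fine (upper_integral L I (fun x => (f x)%:E)).

End Daniell.

(* Main.v *)
Require Import Defs.
From mathcomp Require Import all_boot all_order all_algebra.
From mathcomp Require Import all_classical all_reals.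
From mathcomp Require Import ereal topology normedtype sequences.
From mathcomp Require Import lra.
Import Order.TTheory GRing.Theory Num.Theory numFieldNormedType.Exports.
Local Open Scope classical_set_scope.
Local Open Scope ring_scope.

Section Aux.
Variables (R : realType) (X : Type) (L : set (X -> R)) (I : (X -> R) -> R).
Hypothesis HS : integral_system L I.

Lemma I_le f g : L f -> L g -> (forall x, f x <= g x) -> I f <= I g.
Proof.
case: HS => [[L0 Ladd Lsc Lmax Lmin] [Iadd Isc Ipos Icont]] Lf Lg fg.
have Lm : L (fun x => -1 * f x) by apply Lsc.
have H := Ipos _ (Ladd _ _ Lg Lm).
rewrite Iadd // Isc // mulN1r subr_ge0 in H; apply: H => x.
by rewrite mulN1r subr_ge0.
Qed.

Lemma down_inf g gn x : down_seq L g gn ->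
  g x = ereal_inf (range (fun n => (gn n x)%:E)).
Proof.
case=> _ dec cv.
have H1 := cv x.
have H2 : (fun n => (gn n x)%:E) @ \oo --> ereal_inf (range (fun n => (gn n x)%:E)).
  apply: ereal_nonincreasing_cvgn => n m nm.
  rewrite lee_fin.
  by move: n m nm; apply/(nonincreasing_seqP (fun n => gn n x)).
by rewrite -(cvg_lim (@ereal_hausdorff R) H1) (cvg_lim (@ereal_hausdorff R) H2).
Qed.

Lemma up_sup g gn x : up_seq L g gn ->
  g x = ereal_sup (range (fun n => (gn n x)%:E)).
Proof.
case=> _ dec cv.
have H1 := cv x.
have H2 : (fun n => (gn n x)%:E) @ \oo --> ereal_sup (range (fun n => (gn n x)%:E)).
  apply: ereal_nondecreasing_cvgn => n m nm.
  rewrite lee_fin.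
  by move: n m nm; apply/(nondecreasing_seqP (fun n => gn n x)).
by rewrite -(cvg_lim (@ereal_hausdorff R) H1) (cvg_lim (@ereal_hausdorff R) H2).
Qed.


Lemma down_up_le (f : X -> R) g h gn hn : down_seq L g gn -> up_seq L h hn ->
  (forall x, (g x <= (f x)%:E)%E) -> (forall x, ((f x)%:E <= h x)%E) ->
  (lim ((fun n => (I (gn n))%:E) @ \oo) <= lim ((fun n => (I (hn n))%:E) @ \oo))%E.
Proof.
move=> Dg Uh gf fh.
have HS' := HS.
case: HS' => [[L0 Ladd Lsc Lmax Lmin] [Iadd Isc Ipos Icont]].
have [Lg gdec _] := Dg.
have [Lh hinc _] := Uh.
have gdecP x : {homo (fun n => gn n x) : n m / (n <= m)%N >-> m <= n}.
  by apply/(nonincreasing_seqP (fun n => gn n x)).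
have hincP x : {homo (fun n => hn n x) : n m / (n <= m)%N >-> n <= m}.
  by apply/(nondecreasing_seqP (fun n => hn n x)).
pose dn n x := Num.max (gn n x + -1 * hn n x) 0.
have Ld n : L (dn n).
  by apply: (Lmax _ (fun _ => 0)) => //; apply: Ladd => //; apply: Lsc.
have ddec x n : dn n.+1 x <= dn n x.
  rewrite /dn ge_max !le_max lexx orbT andbT; apply/orP; left.
  by rewrite !mulN1r lerB // ?gdec ?hinc.
have dcv x : (fun n => dn n x) @ \oo --> (0 : R).
  apply/cvgrPdist_lt => e e0.
  have e20 : 0 < e / 2 by rewrite divr_gt0.
  have : (g x < (f x + e / 2)%:E)%E.
    by apply: (le_lt_trans (gf x)); rewrite lte_fin ltrDl.
  rewrite (down_inf g gn x Dg) => /ereal_inf_lt [_ [n1 _ <-]]; rewrite lte_fin => H1.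
  have : ((f x - e / 2)%:E < h x)%E.
    by apply: (lt_le_trans _ (fh x)); rewrite lte_fin ltrBlDr ltrDl.
  rewrite (up_sup h hn x Uh) => /ereal_sup_gt [_ [n2 _ <-]]; rewrite lte_fin => H2.
  exists (maxn n1 n2) => // m /= Hm.
  have g1 : gn m x <= gn n1 x by apply: gdecP; apply: leq_trans Hm; apply: leq_maxl.
  have h2 : hn n2 x <= hn m x by apply: hincP; apply: leq_trans Hm; apply: leq_maxr.
  rewrite sub0r normrN ger0_norm; last by rewrite /dn le_max lexx orbT.
  rewrite /dn gt_max e0 andbT mulN1r.
  have -> : e = (f x + e / 2) - (f x - e / 2).
    by lra.
  apply: ltr_leB; [exact: le_lt_trans g1 H1|exact: ltW (lt_le_trans H2 h2)].
have Id0 := Icont dn Ld ddec dcv.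
have Ile n : I (gn n) <= I (hn n) + I (dn n).
  rewrite -lerBlDl.
  have -> : I (gn n) - I (hn n) = I (fun x => gn n x + -1 * hn n x).
    by rewrite Iadd // ?Isc // ?mulN1r //; apply: Lsc.
  apply: I_le => //; first by apply: Ladd => //; apply: Lsc.
  by move=> x; rewrite /dn le_max lexx.
have cA : cvg ((fun n => (I (gn n))%:E) @ \oo).
  apply/cvgP; apply: ereal_nonincreasing_cvgn => n m nm; rewrite lee_fin.
  by apply: I_le => // x; apply: gdecP.
have cB : (fun n => (I (hn n))%:E) @ \oo --> ereal_sup (range (fun n => (I (hn n))%:E)).
  apply: ereal_nondecreasing_cvgn => n m nm; rewrite lee_fin.
  by apply: I_le => // x; apply: hincP.
have cD : (fun n => (I (dn n))%:E) @ \oo --> 0%E.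
  by apply: cvg_EFin => //; apply: nearW.
have cBD : (fun n => ((I (hn n))%:E + (I (dn n))%:E)%E) @ \oo -->
    (ereal_sup (range (fun n => (I (hn n))%:E)) + 0)%E.
  by apply: cvgeD => //; apply: fin_num_adde_defl.
rewrite (cvg_lim (@ereal_hausdorff R) cB).
rewrite -[X in (_ <= X)%E]adde0 -(cvg_lim (@ereal_hausdorff R) cBD).
apply: lee_lim => //; first exact: cvgP cBD.
by apply: nearW => n; rewrite -EFinD lee_fin.
Qed.

End Aux.

Lemma lower_le_upper (R : realType) X (L : set (X -> R)) (I : (X -> R) -> R) (f : X -> R) : integral_system L I ->
  (lower_integral L I (fun x => (f x)%:E) <= upper_integral L I (fun x => (f x)%:E))%E.
Proof.
move=> HS.
apply: ge_ereal_sup => _ [g [_ gf] <-]; apply: le_ereal_inf_tmp => _ [h [_ fh] <-].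
apply: ge_ereal_sup => _ [gn Hg <-]; apply: le_ereal_inf_tmp => _ [hn Hh <-].
exact: (@down_up_le _ _ _ _ HS f _ _ _ _ Hg Hh gf fh).
Qed.

Section Transfer.
Variables (R : realType) (X Y : Type) (L : set (X -> R)) (I : (X -> R) -> R)
  (M : set (Y -> R)) (J : (Y -> R) -> R) (rho : X -> R) (phi : X -> Y).
Hypothesis hrho : forall x, 0 <= rho x.
Hypothesis hT : forall g, M g -> L (fun x => rho x * g (phi x)) /\
                    I (fun x => rho x * g (phi x)) = J g.

Definition Tt (h : Y -> \bar R) : X -> \bar R := fun x => ((rho x)%:E * h (phi x))%E.

Lemma Tt_cvg (hn : nat -> Y -> R) h x :
  (fun n => (hn n (phi x))%:E) @ \oo --> h (phi x) ->
  (fun n => (rho x * hn n (phi x))%:E) @ \oo --> Tt h x.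
Proof.
move=> H; rewrite /Tt.
under eq_fun do rewrite EFinM.
by apply: cvgeZl.
Qed.

Lemma up_transfer h hn : up_seq M h hn ->
  up_seq L (Tt h) (fun n x => rho x * hn n (phi x)).
Proof.
case=> Mh inc cv; split.
- by move=> n; case: (@hT _ (Mh n)).
- by move=> x n; apply: ler_wpM2l.
- by move=> x; apply: Tt_cvg.
Qed.

Lemma down_transfer h hn : down_seq M h hn ->
  down_seq L (Tt h) (fun n x => rho x * hn n (phi x)).
Proof.
case=> Mh inc cv; split.
- by move=> n; case: (@hT _ (Mh n)).
- by move=> x n; apply: ler_wpM2l.
- by move=> x; apply: Tt_cvg.
Qed.

Lemma Iup_transfer h : (Iup L I (Tt h) <= Iup M J h)%E.
Proof.
apply: le_ereal_inf_tmp => _ [hn Hhn <-]; apply: ereal_inf_lbound.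
exists (fun n x => rho x * hn n (phi x)); first exact: up_transfer.
suff -> : (fun n => (I (fun x => rho x * hn n (phi x)))%:E) = (fun n => (J (hn n))%:E) by [].
apply: funext => n /=.
by case: Hhn => Mh _ _; case: (@hT _ (Mh n)) => _ ->.
Qed.

Lemma Idown_transfer h : (Idown M J h <= Idown L I (Tt h))%E.
Proof.
apply: ge_ereal_sup => _ [hn Hhn <-]; apply: ereal_sup_ubound.
exists (fun n x => rho x * hn n (phi x)); first exact: down_transfer.
suff -> : (fun n => (I (fun x => rho x * hn n (phi x)))%:E) = (fun n => (J (hn n))%:E) by [].
apply: funext => n /=.
by case: Hhn => Mh _ _; case: (@hT _ (Mh n)) => _ ->.
Qed.

Lemma upper_transfer (f : Y -> R) :
  (upper_integral L I (fun x => (rho x * f (phi x))%:E) <=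
   upper_integral M J (fun y => (f y)%:E))%E.
Proof.
apply: le_ereal_inf_tmp => _ [h [[hn Hhn] fh] <-].
apply: le_trans (Iup_transfer h); apply: ereal_inf_lbound.
exists (Tt h) => //; split; first by exists (fun n x => rho x * hn n (phi x)); exact: up_transfer.
by move=> x; rewrite EFinM /Tt; apply: lee_wpmul2l; rewrite ?lee_fin.
Qed.

Lemma lower_transfer (f : Y -> R) :
  (lower_integral M J (fun y => (f y)%:E) <=
   lower_integral L I (fun x => (rho x * f (phi x))%:E))%E.
Proof.
apply: ge_ereal_sup => _ [h [[hn Hhn] hf] <-].
apply: le_trans (Idown_transfer h) _; apply: ereal_sup_ubound.
exists (Tt h) => //; split; first by exists (fun n x => rho x * hn n (phi x)); exact: down_transfer.
by move=> x; rewrite EFinM /Tt; apply: lee_wpmul2l; rewrite ?lee_fin.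
Qed.

End Transfer.

Theorem mainTheorem11 (R : realType) (X Y : Type)
  (L : set (X -> R)) (I : (X -> R) -> R)
  (M : set (Y -> R)) (J : (Y -> R) -> R)
  (rho : X -> R) (phi : X -> Y) :
  integral_system L I -> integral_system M J ->
  (forall x, 0 <= rho x) ->
  (forall g, M g -> L (fun x => rho x * g (phi x)) /\
                    I (fun x => rho x * g (phi x)) = J g) ->
  forall g, L1 M J g ->
    L1 L I (fun x => rho x * g (phi x)) /\
    I1 L I (fun x => rho x * g (phi x)) = I1 M J g.
Proof.
move=> HL HM hrho hT g [Heq Hfin].
have U := @upper_transfer R X Y L I M J rho phi hrho hT g.
have Lo := @lower_transfer R X Y L I M J rho phi hrho hT g.
have LU := @lower_le_upper R X L I (fun x => rho x * g (phi x)) HL.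
have E1 : upper_integral L I (fun x => (rho x * g (phi x))%:E) =
          upper_integral M J (fun y => (g y)%:E).
  apply/le_anti; rewrite U /=; rewrite -Heq; exact: le_trans Lo LU.
have E2 : lower_integral L I (fun x => (rho x * g (phi x))%:E) =
          upper_integral M J (fun y => (g y)%:E).
  apply/le_anti; rewrite -{1}E1 LU /=; rewrite -Heq; exact: Lo.
split; last by rewrite /I1 E1.
by split; rewrite /= ?E1 ?E2.
Qed.
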